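(* There do not exist a mapping $\hat c$ from the set of $3$-element multisets of elements of $[3]=\{1,2,3\}$ to $[3]$ and a function $m'$ from positive integers to positive integers such that the following holds for every positive integer $m$: for every hypergraph $G=(V,E)$ and every $3$-coloring $c:\binom{V}{2}\to[3]$ of the pairs of vertices of $G$ such that every hyperedge containing at least $m$ vertices contains pairs of all three colors, the coloring $c':\binom{V}{3}\to[3]$ defined by $c'(\{x,y,z\})=\hat c(\{c(\{x,y\}),c(\{x,z\}),c(\{y,z\})\})$ (multiset) has the property that every hyperedge containing at least $m'(m)$ vertices contains triples of all three colors.
   Context: $\binom{V}{j}$ denotes the set of $j$-element subsets of $V$. A hyperedge contains a pair/triple if it is a subset of the hyperedge. *)

(* Defs.v *)
From mathcomp Require Import all_boot.
Set Implicit Arguments. Unset Strict Implicit. Unset Printing Implicit Defensive.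

(* A map from 3-element multisets of [3] = 'I_3 to [3] is encoded as a
   function of three arguments invariant under all permutations of them. *)
Definition multiset_map3 (chat : 'I_3 -> 'I_3 -> 'I_3 -> 'I_3) : Prop :=
  forall a b d, chat a b d = chat b a d /\ chat a b d = chat a d b.

(* Pair colouring c : binom(V,2) -> [3]: only its values on 2-element sets
   [set x; y] (x != y) matter. *)

Definition all_pair_colors (T : finType) (c : {set T} -> 'I_3) (e : {set T}) : Prop :=
  forall k : 'I_3, exists x y, [/\ x \in e, y \in e, x != y & c [set x; y] = k].

Definition induced3 (T : finType) (chat : 'I_3 -> 'I_3 -> 'I_3 -> 'I_3)
  (c : {set T} -> 'I_3) (x y z : T) : 'I_3 :=
  chat (c [set x; y]) (c [set x; z]) (c [set y; z]).

Definition all_triple_colors (T : finType) (chat : 'I_3 -> 'I_3 -> 'I_3 -> 'I_3)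
  (c : {set T} -> 'I_3) (e : {set T}) : Prop :=
  forall k : 'I_3, exists x y z,
    [/\ x \in e, y \in e, z \in e, [&& x != y, x != z & y != z] & induced3 chat c x y z = k].

(* Main.v *)
Require Import Defs.
From mathcomp Require Import all_boot.
From mathcomp Require Import zify.

Definition d3 (u v w : nat) := [&& u != v, u != w & v != w].
Definition I3 := iota 0 3.
Lemma finN : all (fun A0 => all (fun A1 => all (fun A2 => all (fun T => all (fun P01 =>
  all (fun P02 => all (fun P10 => all (fun P12 => all (fun P20 => all (fun P21 =>
  ~~ [&& d3 A0 P01 P02, d3 A1 P10 P12, d3 A2 P20 P21,
         d3 A0 P10 T, d3 A0 P20 T, d3 A1 P01 T, d3 A1 P21 T, d3 A2 P02 T & d3 A2 P12 T])
  I3) I3) I3) I3) I3) I3) I3) I3) I3) I3.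
Proof. by vm_compute. Qed.

Lemma memI (x : 'I_3) : (x : nat) \in I3.
Proof. by case: x => x hx; rewrite mem_iota. Qed.

Lemma inordE n k (x : 'I_n.+1) : k <= n -> (inord k == x) = (k == x :> nat).
Proof. by move=> hk; rewrite -(inj_eq val_inj) /= inordK. Qed.

Lemma inord_eq n i j : i <= n -> j <= n -> (inord i == inord j :> 'I_n.+1) = (i == j).
Proof. by move=> hi hj; rewrite inordE // inordK. Qed.

Lemma cover3 (u v w : 'I_3) : (forall k : 'I_3, k \in [:: u; v; w]) -> d3 u v w.
Proof.
move=> h.
have h0 := h (@Ordinal 3 0 isT); have h1 := h (@Ordinal 3 1 isT);
have h2 := h (@Ordinal 3 2 isT).
move: u v w h0 h1 h2 {h}.
by do 3! case=> [[|[|[|//]]] ?].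
Qed.

Lemma all3 (a b c : 'I_3) : d3 a b c -> forall j : 'I_3, j \in [:: a; b; c].
Proof.
move: a b c; do 3! case=> [[|[|[|//]]] ?]; move=> hd; case=> [[|[|[|//]]] ?]; by [].
Qed.

Theorem proposition5 :
  ~ exists (chat : 'I_3 -> 'I_3 -> 'I_3 -> 'I_3) (m' : nat -> nat),
      [/\ multiset_map3 chat,
          (forall n, 0 < n -> 0 < m' n) &
          forall m, 0 < m ->
          forall (V : finType) (E : {set {set V}}) (c : {set V} -> 'I_3),
            (forall e, e \in E -> m <= #|e| -> all_pair_colors c e) ->
            forall e, e \in E -> m' m <= #|e| -> all_triple_colors chat c e].
Proof.
move=> [chat [m' [sym _ H]]].
have s12 u v w : chat u v w = chat v u w by case: (sym u v w).
have s23 u v w : chat u v w = chat u w v by case: (sym u v w).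
pose N := m' 1.
have key : forall col : {set 'I_(N.+4)} -> 'I_3,
    all_pair_colors col setT -> all_triple_colors chat col setT.
  move=> col hc; apply: (H 1 isT _ [set setT] col).
  - by move=> e; rewrite inE => /eqP ->.
  - by rewrite inE.
  - rewrite cardsT card_ord /N; lia.
have F1 : forall a b c : 'I_3, d3 a b c -> d3 (chat a a a) (chat a a b) (chat a a c).
  move=> a b c dabc; apply: cover3 => k.
  pose col (S : {set 'I_(N.+4)}) := if (inord 0 \in S) && (inord 1 \in S) then b
    else if (inord 2 \in S) && (inord 3 \in S) then c else a.
  have [|x [y [z [_ _ _ dxyz <-]]]] := key col _ k.
    move=> j; have := @all3 a b c dabc j; rewrite !inE => /or3P [] /eqP ->.
    - exists (inord 0), (inord 2); split; rewrite ?inE ?inord_eq //.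
      by rewrite /col !in_set2 !inord_eq.
    - exists (inord 0), (inord 1); split; rewrite ?inE ?inord_eq //.
      by rewrite /col !in_set2 !inord_eq.
    - exists (inord 2), (inord 3); split; rewrite ?inE ?inord_eq //.
      by rewrite /col !in_set2 !inord_eq.
  move: dxyz => /and3P [hxy hxz hyz].
  have hxy' : (x : nat) != y := hxy.
  have hxz' : (x : nat) != z := hxz.
  have hyz' : (y : nat) != z := hyz.
  rewrite /induced3 /col !in_set2 !inordE //.
  repeat (case: ifP => ?); try (exfalso; lia);
  first [ by rewrite !inE eqxx ?orbT | by rewrite s23 !inE eqxx ?orbT
        | by rewrite s12 !inE eqxx ?orbT | by rewrite s12 s23 !inE eqxx ?orbT
        | by rewrite s23 s12 !inE eqxx ?orbT | by rewrite s12 s23 s12 !inE eqxx ?orbT ].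
have F4 : forall a b c : 'I_3, d3 a b c -> d3 (chat a a a) (chat a b b) (chat a b c).
  move=> a b c dabc; apply: cover3 => k.
  pose col (S : {set 'I_(N.+4)}) := if (inord 0 \in S) then
     (if inord 1 \in S then c else b) else a.
  have [|x [y [z [_ _ _ dxyz <-]]]] := key col _ k.
    move=> j; have := @all3 a b c dabc j; rewrite !inE => /or3P [] /eqP ->.
    - exists (inord 1), (inord 2); split; rewrite ?inE ?inord_eq //.
      by rewrite /col !in_set2 !inord_eq.
    - exists (inord 0), (inord 2); split; rewrite ?inE ?inord_eq //.
      by rewrite /col !in_set2 !inord_eq.
    - exists (inord 0), (inord 1); split; rewrite ?inE ?inord_eq //.
      by rewrite /col !in_set2 !inord_eq.
  move: dxyz => /and3P [hxy hxz hyz].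
  have hxy' : (x : nat) != y := hxy.
  have hxz' : (x : nat) != z := hxz.
  have hyz' : (y : nat) != z := hyz.
  rewrite /induced3 /col !in_set2 !inordE //.
  repeat (case: ifP => ?); try (exfalso; lia);
  first [ by rewrite !inE eqxx ?orbT | by rewrite s23 !inE eqxx ?orbT
        | by rewrite s12 !inE eqxx ?orbT | by rewrite s12 s23 !inE eqxx ?orbT
        | by rewrite s23 s12 !inE eqxx ?orbT | by rewrite s12 s23 s12 !inE eqxx ?orbT ].
pose o0 := @Ordinal 3 0 isT; pose o1 := @Ordinal 3 1 isT; pose o2 := @Ordinal 3 2 isT.
have h1 := F1 o0 o1 o2 isT.
have h2 := F1 o1 o0 o2 isT.
have h3 := F1 o2 o0 o1 isT.
have g1 := F4 o0 o1 o2 isT.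
have g2 := F4 o0 o2 o1 isT.
have g3 := F4 o1 o0 o2 isT.
have g4 := F4 o1 o2 o0 isT.
have g5 := F4 o2 o0 o1 isT.
have g6 := F4 o2 o1 o0 isT.
have e bb aa : chat aa bb bb = chat bb bb aa by rewrite s12 s23.
rewrite !e in g1 g2 g3 g4 g5 g6.
rewrite (s23 o0 o2 o1) in g2.
rewrite (s12 o1 o0 o2) in g3.
rewrite (s23 o1 o2 o0) (s12 o1 o0 o2) in g4.
rewrite (s12 o2 o0 o1) (s23 o0 o2 o1) in g5.
rewrite (s23 o2 o1 o0) (s12 o2 o0 o1) (s23 o0 o2 o1) in g6.
have := finN.
move=> /allP/(_ _ (memI (chat o0 o0 o0))) /allP/(_ _ (memI (chat o1 o1 o1)))
  /allP/(_ _ (memI (chat o2 o2 o2))) /allP/(_ _ (memI (chat o0 o1 o2)))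
  /allP/(_ _ (memI (chat o0 o0 o1))) /allP/(_ _ (memI (chat o0 o0 o2)))
  /allP/(_ _ (memI (chat o1 o1 o0))) /allP/(_ _ (memI (chat o1 o1 o2)))
  /allP/(_ _ (memI (chat o2 o2 o0))) /allP/(_ _ (memI (chat o2 o2 o1))).
by rewrite h1 h2 h3 g1 g2 g3 g4 g5 g6.
Qed.
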